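(* Let $X$ be a strongly shortcut $R$-rough geodesic metric space (for some $R\ge0$). Then there exists $L_X>1$ such that whenever $Y$ is an $R'$-rough geodesic metric space (for some $R'\ge 0$), $C>0$, and $f\colon Y\to X$ is an $(L_X,C)$-quasi-isometry up to scaling, then $Y$ is strongly shortcut. In particular, if $Y$ is a rough geodesic metric space and $f\colon Y\to X$ is a rough similarity, then $Y$ is strongly shortcut.
   Context: $X$ is $R$-rough geodesic if any $x_1,x_2$ are joined by $f\colon[0,\ell]\to X$, $\ell=d(x_1,x_2)$, $f(0)=x_1,f(\ell)=x_2$, with $|d(f(s),f(t))-|s-t||\le R$; a rough geodesic space is one that is $R$-rough geodesic for some $R\ge0$. An $R$-circle is a map $\alpha\colon S\to X$ from a Riemannian circle $S$ of length $|S|$ with $d(\alpha(p),\alpha(q))\le d_S(p,q)+R$; for $K>1$ it is $\frac1K$-almost isometric if $d(\alpha(p),\alpha(\bar p))\ge\frac1K\cdot\frac{|S|}2$ for all antipodal $p,\bar p$. An $R$-rough geodesic space is strongly shortcut if for some $K>1$ there is a bound on the lengths of its $\frac1K$-almost isometric $R$-circles. For a metric space $Y$ and $\lambda>0$, $\lambda Y$ denotes $Y$ with metric multiplied by $\lambda$. A map $f\colon Y\to X$ is a $(K,C)$-quasi-isometry up to scaling if for some $\lambda>0$ it is a $(K,C)$-quasi-isometry $\lambda Y\to X$ (i.e. $\frac1K d-C\le d(f(\cdot),f(\cdot))\le Kd+C$ and every point of $X$ is within $C$ of the image). It is a rough similarity if it is a $(1,C)$-quasi-isometry up to scaling for some $C>0$.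 *)

(* Defs.v *)
From Stdlib Require Import Reals.
Open Scope R_scope.

Definition is_metric {X : Type} (d : X -> X -> R) : Prop :=
  (forall x y, 0 <= d x y) /\
  (forall x y, d x y = 0 <-> x = y) /\
  (forall x y, d x y = d y x) /\
  (forall x y z, d x z <= d x y + d y z).

Definition rough_geodesic {X : Type} (d : X -> X -> R) (Rr : R) : Prop :=
  forall x1 x2 : X, exists f : R -> X,
    f 0 = x1 /\ f (d x1 x2) = x2 /\
    forall s t, 0 <= s <= d x1 x2 -> 0 <= t <= d x1 x2 ->
      Rabs (d (f s) (f t) - Rabs (s - t)) <= Rr.

(* Riemannian circle S of length L > 0 is modelled as [0, L) with the
   intrinsic distance min(|s-t|, L-|s-t|); a map S -> X is a function
   R -> X of which only the values on [0, L) matter. *)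
Definition circ_dist (L s t : R) : R := Rmin (Rabs (s - t)) (L - Rabs (s - t)).

Definition in_circle (L s : R) : Prop := 0 <= s < L.

Definition is_R_circle {X : Type} (d : X -> X -> R) (Rr L : R) (alpha : R -> X) : Prop :=
  0 < L /\
  forall s t, in_circle L s -> in_circle L t ->
    d (alpha s) (alpha t) <= circ_dist L s t + Rr.

Definition almost_isometric {X : Type} (d : X -> X -> R) (K L : R) (alpha : R -> X) : Prop :=
  forall s, 0 <= s < L / 2 ->
    d (alpha s) (alpha (s + L / 2)) >= (1 / K) * (L / 2).

Definition strongly_shortcut {X : Type} (d : X -> X -> R) (Rr : R) : Prop :=
  rough_geodesic d Rr /\
  exists K : R, 1 < K /\ exists B : R,
    forall (L : R) (alpha : R -> X),
      is_R_circle d Rr L alpha -> almost_isometric d K L alpha -> L <= B.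

Definition quasi_isometry {Y X : Type} (dY : Y -> Y -> R) (dX : X -> X -> R)
  (f : Y -> X) (K C : R) : Prop :=
  (forall y1 y2, (1 / K) * dY y1 y2 - C <= dX (f y1) (f y2) /\
                 dX (f y1) (f y2) <= K * dY y1 y2 + C) /\
  (forall x, exists y, dX x (f y) <= C).

Definition qi_up_to_scaling {Y X : Type} (dY : Y -> Y -> R) (dX : X -> X -> R)
  (f : Y -> X) (K C : R) : Prop :=
  exists lambda : R, 0 < lambda /\
    quasi_isometry (fun y1 y2 => lambda * dY y1 y2) dX f K C.

Definition rough_similarity {Y X : Type} (dY : Y -> Y -> R) (dX : X -> X -> R)
  (f : Y -> X) : Prop :=
  exists C : R, 0 < C /\ qi_up_to_scaling dY dX f 1 C.

(* Main.v *)
Require Import Defs.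
From Stdlib Require Import Reals Lra Lia ZArith IndefiniteDescription.
Open Scope R_scope.

Lemma choice_nat {A : Type} (P : nat -> A -> Prop) :
  (forall k, exists g, P k g) -> exists G : nat -> A, forall k, P k (G k).
Proof.
  intros H. exists (fun k => proj1_sig (constructive_indefinite_description _ (H k))).
  intro k. exact (proj2_sig (constructive_indefinite_description _ (H k))).
Qed.

Definition idx (m u : R) : nat := Z.to_nat (Int_part (u / m)).

Lemma idx_spec m u : 0 < m -> 0 <= u ->
  INR (idx m u) * m <= u < (INR (idx m u) + 1) * m.
Proof.
  intros Hm Hu. unfold idx.
  destruct (base_Int_part (u / m)) as [H1 H2].
  assert (Hz : (0 <= Int_part (u / m))%Z).
  { assert (0 <= u / m) by (unfold Rdiv; apply Rmult_le_pos; [lra | left; apply Rinv_0_lt_compat; lra]).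
    assert (IZR (-1) < IZR (Int_part (u/m))) by (simpl; lra).
    apply lt_IZR in H0. lia. }
  rewrite INR_IZR_INZ, Z2Nat.id by exact Hz.
  set (z := IZR (Int_part (u / m))) in *.
  assert (Hum : u = (u / m) * m) by (field; lra).
  split.
  - rewrite Hum. apply Rmult_le_compat_r; lra.
  - rewrite Hum. apply Rmult_lt_compat_r; lra.
Qed.

Lemma idx_unique m u k : 0 < m -> INR k * m <= u < (INR k + 1) * m -> idx m u = k.
Proof.
  intros Hm [H1 H2].
  assert (Hu : 0 <= u) by (pose proof (pos_INR k); nra).
  destruct (idx_spec m u Hm Hu) as [H3 H4].
  set (j := idx m u) in *.
  assert (INR j < INR k + 1).
  { apply (Rmult_lt_reg_r m); lra. }
  assert (INR k < INR j + 1).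
  { apply (Rmult_lt_reg_r m); lra. }
  rewrite <- S_INR in *. apply INR_lt in H. apply INR_lt in H0. lia.
Qed.

Lemma chain {X : Type} (d : X -> X -> R) (x : nat -> X) (N : nat) (m : R) :
  is_metric d -> (forall k, (k < N)%nat -> d (x k) (x (S k)) <= m) ->
  forall t p, (p + t <= N)%nat -> d (x p) (x (p + t)%nat) <= INR t * m.
Proof.
  intros [H0 [H1 [H2 H3]]] Hs. induction t; intros p Hp.
  - rewrite Nat.add_0_r. assert (d (x p) (x p) = 0) by (apply H1; reflexivity).
    simpl. lra.
  - rewrite Nat.add_succ_r. rewrite S_INR.
    specialize (IHt p ltac:(lia)). specialize (Hs (p + t)%nat ltac:(lia)).
    specialize (H3 (x p) (x (p+t)%nat) (x (S (p + t)))). lra.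
Qed.

Definition clampφ (Rx l a : R) := Rmax 0 (Rmin (a - Rx) l).

Lemma clamp_lip Rx l a b : 0 <= l -> Rabs (clampφ Rx l a - clampφ Rx l b) <= Rabs (a - b).
Proof.
  intros Hl. unfold clampφ, Rmax, Rmin, Rabs.
  repeat (destruct Rle_dec); repeat (destruct Rcase_abs); lra.
Qed.

Lemma clamp_range Rx l a : 0 <= l -> 0 <= clampφ Rx l a <= l.
Proof. intros. unfold clampφ, Rmax, Rmin. repeat (destruct Rle_dec); lra. Qed.

Lemma seg_props {X : Type} (d : X -> X -> R) (Rx m : R) (x1 x2 : X) (g : R -> X) :
  is_metric d -> 0 <= Rx -> d x1 x2 + 2 * Rx <= m ->
  g 0 = x1 -> g (d x1 x2) = x2 ->
  (forall s t, 0 <= s <= d x1 x2 -> 0 <= t <= d x1 x2 ->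
      Rabs (d (g s) (g t) - Rabs (s - t)) <= Rx) ->
  (forall a, 0 <= a <= m -> d (g (clampφ Rx (d x1 x2) a)) x1 <= a) /\
  (forall a, 0 <= a <= m -> d (g (clampφ Rx (d x1 x2) a)) x2 <= m - a) /\
  (forall a b, d (g (clampφ Rx (d x1 x2) a)) (g (clampφ Rx (d x1 x2) b)) <= Rabs (a - b) + Rx).
Proof.
  intros Hmet HR Hm E0 E1 Hb.
  pose proof Hmet as [H0 [H1 [H2 H3]]].
  set (l := d x1 x2) in *.
  assert (Hl : 0 <= l) by apply H0.
  assert (Hbd : forall s t, 0 <= s <= l -> 0 <= t <= l -> d (g s) (g t) <= Rabs (s - t) + Rx).
  { intros s t Hs Ht. specialize (Hb s t Hs Ht).
    pose proof (Rle_abs (d (g s) (g t) - Rabs (s - t))). lra. }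
  assert (H0l : 0 <= 0 <= l) by lra.
  assert (Hll : 0 <= l <= l) by lra.
  split; [|split].
  - intros a Ha. pose proof (clamp_range Rx l a Hl) as Hc.
    set (c := clampφ Rx l a) in *.
    destruct (Req_dec c 0) as [Hc0|Hc0].
    + rewrite Hc0, E0. assert (d x1 x1 = 0) by (apply H1; reflexivity). lra.
    + assert (c <= a - Rx).
      { unfold c, clampφ, Rmax, Rmin in *. repeat (destruct Rle_dec); lra. }
      specialize (Hbd c 0 Hc H0l). rewrite E0 in Hbd.
      rewrite Rminus_0_r, Rabs_right in Hbd by lra. lra.
  - intros a Ha. pose proof (clamp_range Rx l a Hl) as Hc.
    set (c := clampφ Rx l a) in *.
    destruct (Req_dec c l) as [Hc0|Hc0].
    + rewrite Hc0, E1. assert (d x2 x2 = 0) by (apply H1; reflexivity). lra.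
    + assert (a - Rx <= c).
      { unfold c, clampφ, Rmax, Rmin in *. repeat (destruct Rle_dec); lra. }
      specialize (Hbd c l Hc Hll). rewrite E1 in Hbd.
      rewrite Rabs_left1 in Hbd by lra. lra.
  - intros a b. pose proof (clamp_range Rx l a Hl). pose proof (clamp_range Rx l b Hl).
    pose proof (clamp_lip Rx l a b Hl).
    specialize (Hbd (clampφ Rx l a) (clampφ Rx l b) H H4). lra.
Qed.


Lemma pair_le {X : Type} (d : X -> X -> R) (Rx m : R) (N : nat) (x : nat -> X)
  (seg : nat -> R -> X) :
  is_metric d -> 0 <= Rx -> 0 < m -> (2 <= N)%nat -> x N = x 0%nat ->
  (forall k, (k < N)%nat -> d (x k) (x (S k)) <= m) ->
  (forall k a, (k < N)%nat -> 0 <= a <= m -> d (seg k a) (x k) <= a) ->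
  (forall k a, (k < N)%nat -> 0 <= a <= m -> d (seg k a) (x (S k)) <= m - a) ->
  (forall k a b, (k < N)%nat -> d (seg k a) (seg k b) <= Rabs (a - b) + Rx) ->
  forall u v, in_circle (INR N * m) u -> in_circle (INR N * m) v ->
  (idx m u <= idx m v)%nat ->
  d (seg (idx m u) (u - INR (idx m u) * m)) (seg (idx m v) (v - INR (idx m v) * m))
    <= circ_dist (INR N * m) u v + Rx.
Proof.
  intros Hmet HR Hm HN Hx Hl HS1 HS2 HS3 u v Hu Hv Hij.
  pose proof Hmet as [H0 [H1 [H2 H3]]].
  unfold in_circle in *.
  destruct (idx_spec m u Hm ltac:(lra)) as [Hu1 Hu2].
  destruct (idx_spec m v Hm ltac:(lra)) as [Hv1 Hv2].
  set (i := idx m u) in *. set (j := idx m v) in *.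
  assert (HiN : (i < N)%nat).
  { apply INR_lt. apply (Rmult_lt_reg_r m); [lra|].
    pose proof (pos_INR i). nra. }
  assert (HjN : (j < N)%nat).
  { apply INR_lt. apply (Rmult_lt_reg_r m); [lra|].
    pose proof (pos_INR j). nra. }
  assert (HN2 : 2 <= INR N) by (apply (le_INR 2); lia).
  set (a := u - INR i * m). set (b := v - INR j * m).
  unfold circ_dist.
  destruct (Nat.eq_dec i j) as [Eij|Nij].
  - rewrite <- Eij. fold i in b. fold b.
    assert (Hab : a - b = u - v) by (unfold a, b; rewrite <- Eij; ring).
    specialize (HS3 i a b HiN). rewrite Hab in HS3.
    assert (Rabs (u - v) < m).
    { unfold a, b in *. rewrite <- Eij in *. unfold Rabs; destruct Rcase_abs; nra. }
    rewrite Rmin_left; [lra|]. nra.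
  - assert (Hlt : (S i <= j)%nat) by lia.
    assert (HSij : INR i + 1 <= INR j) by (rewrite <- S_INR; apply le_INR; exact Hlt).
    assert (Huv : u < v) by nra.
    rewrite Rabs_left by lra.
    assert (F : d (seg i a) (seg j b) <= v - u).
    { pose proof (chain d x N m Hmet Hl (j - S i) (S i) ltac:(lia)) as Hc.
      replace (S i + (j - S i))%nat with j in Hc by lia.
      rewrite minus_INR in Hc by lia. rewrite S_INR in Hc.
      pose proof (HS2 i a HiN ltac:(unfold a; lra)).
      pose proof (HS1 j b HjN ltac:(unfold b; lra)).
      pose proof (H3 (seg i a) (x (S i)) (seg j b)).
      pose proof (H3 (x (S i)) (x j) (seg j b)).
      rewrite (H2 (x j) (seg j b)) in *.
      unfold a, b in *. nra. }
    assert (Bk : d (seg i a) (seg j b) <= INR N * m - (v - u)).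
    { pose proof (chain d x N m Hmet Hl i 0 ltac:(lia)) as Hc1.
      pose proof (chain d x N m Hmet Hl (N - S j) (S j) ltac:(lia)) as Hc2.
      replace (S j + (N - S j))%nat with N in Hc2 by lia.
      rewrite minus_INR in Hc2 by lia. rewrite S_INR in Hc2.
      simpl Nat.add in Hc1. rewrite Hx in Hc2.
      pose proof (HS1 i a HiN ltac:(unfold a; lra)).
      pose proof (HS2 j b HjN ltac:(unfold b; lra)).
      pose proof (H3 (seg i a) (x i) (seg j b)).
      pose proof (H3 (x i) (x 0%nat) (seg j b)).
      pose proof (H3 (x 0%nat) (x (S j)) (seg j b)).
      rewrite (H2 (x i) (x 0%nat)) in *.
      rewrite (H2 (x 0%nat) (x (S j))) in *.
      rewrite (H2 (x (S j)) (seg j b)) in *.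
      unfold a, b in *. nra. }
    replace (- (u - v)) with (v - u) by ring.
    pose proof (Rmin_glb _ _ _ F Bk). lra.
Qed.

Lemma circle_lemma {X : Type} (d : X -> X -> R) (Rx m : R) (N : nat) (x : nat -> X)
  (seg : nat -> R -> X) :
  is_metric d -> 0 <= Rx -> 0 < m -> (2 <= N)%nat -> x N = x 0%nat ->
  (forall k, (k < N)%nat -> d (x k) (x (S k)) <= m) ->
  (forall k a, (k < N)%nat -> 0 <= a <= m -> d (seg k a) (x k) <= a) ->
  (forall k a, (k < N)%nat -> 0 <= a <= m -> d (seg k a) (x (S k)) <= m - a) ->
  (forall k a b, (k < N)%nat -> d (seg k a) (seg k b) <= Rabs (a - b) + Rx) ->
  is_R_circle d Rx (INR N * m) (fun u => seg (idx m u) (u - INR (idx m u) * m)).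
Proof.
  intros Hmet HR Hm HN Hx Hl HS1 HS2 HS3. split.
  - assert (2 <= INR N) by (apply (le_INR 2); lia). nra.
  - intros u v Hu Hv.
    destruct (le_lt_dec (idx m u) (idx m v)).
    + eapply pair_le; eauto.
    + pose proof Hmet as [H0 [H1 [H2 H3]]].
      rewrite H2.
      replace (circ_dist (INR N * m) u v) with (circ_dist (INR N * m) v u).
      * eapply pair_le; eauto. lia.
      * unfold circ_dist. rewrite Rabs_minus_sym. reflexivity.
Qed.

Lemma antipodal_lemma {X : Type} (d : X -> X -> R) (m : R) (n : nat) (x : nat -> X)
  (seg : nat -> R -> X) :
  is_metric d -> 0 < m ->
  (forall k a, (k < 2 * n)%nat -> 0 <= a <= m -> d (seg k a) (x k) <= a) ->
  (forall k a, (k < 2 * n)%nat -> 0 <= a <= m -> d (seg k a) (x (S k)) <= m - a) ->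
  forall u, 0 <= u < INR n * m ->
  exists k a, (k < n)%nat /\ 0 <= a <= m /\
    d (seg (idx m u) (u - INR (idx m u) * m))
      (seg (idx m (u + INR n * m)) ((u + INR n * m) - INR (idx m (u + INR n * m)) * m))
    >= d (x k) (x (k + n)%nat) - 2 * a /\
    d (seg (idx m u) (u - INR (idx m u) * m))
      (seg (idx m (u + INR n * m)) ((u + INR n * m) - INR (idx m (u + INR n * m)) * m))
    >= d (x (S k)) (x (S k + n)%nat) - 2 * (m - a).
Proof.
  intros Hmet Hm HS1 HS2 u Hu.
  pose proof Hmet as [H0 [H1 [H2 H3]]].
  destruct (idx_spec m u Hm ltac:(lra)) as [Hu1 Hu2].
  set (i := idx m u) in *.
  assert (Hin : (i < n)%nat).
  { apply INR_lt. apply (Rmult_lt_reg_r m); [lra|]. lra. }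
  assert (Hv : idx m (u + INR n * m) = (i + n)%nat).
  { apply idx_unique; auto. rewrite plus_INR. lra. }
  rewrite Hv. rewrite plus_INR.
  replace (u + INR n * m - (INR i + INR n) * m) with (u - INR i * m) by ring.
  set (a := u - INR i * m).
  assert (Ha : 0 <= a <= m) by (unfold a; lra).
  exists i, a. split; [exact Hin|]. split; [exact Ha|].
  pose proof (HS1 i a ltac:(lia) Ha).
  pose proof (HS1 (i + n)%nat a ltac:(lia) Ha).
  pose proof (HS2 i a ltac:(lia) Ha).
  pose proof (HS2 (i + n)%nat a ltac:(lia) Ha).
  set (p := seg i a) in *. set (q := seg (i + n)%nat a) in *.
  pose proof (H3 (x i) p (x (i + n)%nat)).
  pose proof (H3 p q (x (i + n)%nat)).
  pose proof (H3 (x (S i)) p (x (S i + n)%nat)).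
  pose proof (H3 p q (x (S i + n)%nat)).
  rewrite (H2 (x i) p) in *. rewrite (H2 (x (S i)) p) in *.
  simpl Nat.add in *. simpl in H6. 
  split; lra.
Qed.

Lemma part1 {X : Type} (dX : X -> X -> R) (Rx KX BX LX : R) (n : nat) :
  is_metric dX -> 0 <= Rx -> rough_geodesic dX Rx -> 1 < KX ->
  (forall (L : R) (alpha : R -> X),
      is_R_circle dX Rx L alpha -> almost_isometric dX KX L alpha -> L <= BX) ->
  1 < LX -> (1 <= n)%nat ->
  0 < 1 / (2 * LX ^ 2) - LX / (2 * INR n) - LX / (2 * KX) ->
  forall (Y : Type) (dY : Y -> Y -> R) (Ry C : R) (f : Y -> X),
    is_metric dY -> 0 <= Ry -> rough_geodesic dY Ry -> 0 < C ->
    qi_up_to_scaling dY dX f LX C -> strongly_shortcut dY Ry.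
Proof.
  intros HmX HRx HgX HKX HBX HLX Hn1 Hθ Y dY Ry C f HmY HRy HgY HC Hqi.
  destruct Hqi as [lam [Hlam [Hq _]]].
  split; [assumption|]. exists LX. split; [lra|].
  set (θ := 1 / (2 * LX ^ 2) - LX / (2 * INR n) - LX / (2 * KX)) in *.
  set (E := C + (1 + INR n / KX) * (LX * (lam * Ry) + C + 2 * Rx)).
  assert (Hn : 1 <= INR n) by (apply (le_INR 1); lia).
  assert (HE : 0 <= E).
  { unfold E. assert (0 <= INR n / KX) by (unfold Rdiv; apply Rmult_le_pos; [lra| left; apply Rinv_0_lt_compat; lra]).
    assert (0 <= LX * (lam * Ry)) by (apply Rmult_le_pos; [lra| apply Rmult_le_pos; lra]).
    nra. }
  assert (Hlt : 0 < LX * lam) by nra.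
  assert (Hlθ : 0 < lam * θ) by nra.
  exists (Rabs BX / (LX * lam) + E / (lam * θ)).
  intros L alpha Hc Ha.
  destruct (Rle_lt_dec L (Rabs BX / (LX * lam) + E / (lam * θ))) as [Hle|Hgt]; [exact Hle|].
  exfalso.
  assert (T1 : 0 <= Rabs BX / (LX * lam)).
  { unfold Rdiv. apply Rmult_le_pos; [apply Rabs_pos| left; apply Rinv_0_lt_compat; lra]. }
  assert (T2 : 0 <= E / (lam * θ)).
  { unfold Rdiv. apply Rmult_le_pos; [lra| left; apply Rinv_0_lt_compat; lra]. }
  assert (HL1 : Rabs BX < LX * lam * L).
  { replace (Rabs BX) with ((LX * lam) * (Rabs BX / (LX * lam))) by (field; lra).
    apply Rmult_lt_compat_l; lra. }
  assert (HL2 : E < lam * θ * L).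
  { replace E with ((lam * θ) * (E / (lam * θ))) by (field; lra).
    apply Rmult_lt_compat_l; lra. }
  pose proof Hc as [HL0 Hcirc].
  set (N := (2 * n)%nat).
  assert (HINR : INR N = 2 * INR n) by (unfold N; rewrite mult_INR; reflexivity).
  set (σ := L / INR N).
  assert (Hσ : 0 < σ) by (unfold σ; apply Rdiv_lt_0_compat; lra).
  assert (HnS : INR n * σ = L / 2) by (unfold σ; rewrite HINR; field; lra).
  set (m := LX * (lam * (σ + Ry)) + C + 2 * Rx).
  assert (Hm : 0 < m).
  { unfold m. assert (0 < LX * (lam * (σ + Ry))) by (apply Rmult_lt_0_compat; [lra| apply Rmult_lt_0_compat; lra]). lra. }
  set (pos := fun k => if Nat.eqb k N then 0 else INR k * σ).
  set (x := fun k => f (alpha (pos k))).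
  assert (Hpos : forall k, (k < N)%nat -> pos k = INR k * σ).
  { intros k Hk. unfold pos. destruct (Nat.eqb_spec k N); [lia|reflexivity]. }
  assert (HposN : pos N = 0) by (unfold pos; rewrite Nat.eqb_refl; reflexivity).
  assert (Hpos0 : pos 0%nat = 0) by (unfold pos; destruct (Nat.eqb 0 N); simpl; ring).
  assert (Hin : forall k, (k <= N)%nat -> in_circle L (pos k)).
  { intros k Hk. unfold in_circle. destruct (Nat.eq_dec k N) as [->|Hne].
    - rewrite HposN. lra.
    - rewrite Hpos by lia. split.
      + apply Rmult_le_pos; [apply pos_INR| lra].
      + assert (INR k + 1 <= INR N) by (rewrite <- S_INR; apply le_INR; lia).
        assert (INR N * σ = L) by (unfold σ; field; lra). nra. }
  assert (Hstep : forall k, (k < N)%nat -> circ_dist L (pos k) (pos (S k)) <= σ).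
  { intros k Hk. unfold circ_dist. rewrite (Hpos k Hk).
    destruct (Nat.eq_dec (S k) N) as [E1|E1].
    - rewrite E1, HposN. eapply Rle_trans; [apply Rmin_r|].
      assert (INR k + 1 = INR N) by (rewrite <- S_INR; rewrite E1; reflexivity).
      assert (INR N * σ = L) by (unfold σ; field; lra).
      rewrite Rminus_0_r. rewrite Rabs_right by (apply Rle_ge, Rmult_le_pos; [apply pos_INR|lra]).
      nra.
    - rewrite (Hpos (S k)) by lia. eapply Rle_trans; [apply Rmin_l|].
      rewrite S_INR. replace (INR k * σ - (INR k + 1) * σ) with (- σ) by ring.
      rewrite Rabs_Ropp, Rabs_right; lra. }
  assert (Hxl : forall k, (k < N)%nat -> dX (x k) (x (S k)) + 2 * Rx <= m).
  { intros k Hk. unfold x. destruct (Hq (alpha (pos k)) (alpha (pos (S k)))) as [_ Hup].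
    pose proof (Hcirc (pos k) (pos (S k)) (Hin k ltac:(lia)) (Hin (S k) ltac:(lia))) as Hd.
    pose proof (Hstep k Hk).
    assert (dY (alpha (pos k)) (alpha (pos (S k))) <= σ + Ry) by lra.
    assert (lam * dY (alpha (pos k)) (alpha (pos (S k))) <= lam * (σ + Ry)) by (apply Rmult_le_compat_l; lra).
    assert (LX * (lam * dY (alpha (pos k)) (alpha (pos (S k)))) <= LX * (lam * (σ + Ry))) by (apply Rmult_le_compat_l; lra).
    unfold m. lra. }
  set (D := 1 / LX * (lam * (1 / LX * (L / 2))) - C).
  assert (Hanti : forall k, (k <= n)%nat -> dX (x k) (x (k + n)%nat) >= D).
  { intros k Hk. unfold x.
    destruct (Hq (alpha (pos k)) (alpha (pos (k + n)%nat))) as [Hlo _].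
    assert (Hyd : dY (alpha (pos k)) (alpha (pos (k + n)%nat)) >= 1 / LX * (L / 2)).
    { destruct (Nat.eq_dec k n) as [->|Hne].
      - replace (n + n)%nat with N by (unfold N; lia). rewrite HposN.
        rewrite (Hpos n) by (unfold N; lia). rewrite HnS.
        pose proof HmY as [_ [_ [HsY _]]]. rewrite HsY.
        specialize (Ha 0 ltac:(lra)). replace (0 + L / 2) with (L / 2) in Ha by ring.
        exact Ha.
      - rewrite (Hpos k) by (unfold N; lia). rewrite (Hpos (k + n)%nat) by (unfold N; lia).
        assert (INR k + 1 <= INR n) by (rewrite <- S_INR; apply le_INR; lia).
        rewrite plus_INR. replace ((INR k + INR n) * σ) with (INR k * σ + L / 2) by (rewrite <- HnS; ring).
        apply Ha. split; [apply Rmult_le_pos; [apply pos_INR|lra]|]. nra. }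
    assert (lam * dY (alpha (pos k)) (alpha (pos (k + n)%nat)) >= lam * (1 / LX * (L / 2))) by (apply Rle_ge, Rmult_le_compat_l; lra).
    assert (1 / LX * (lam * dY (alpha (pos k)) (alpha (pos (k + n)%nat))) >= 1 / LX * (lam * (1 / LX * (L / 2)))).
    { apply Rle_ge, Rmult_le_compat_l; [|lra]. unfold Rdiv. rewrite Rmult_1_l. left. apply Rinv_0_lt_compat. lra. }
    unfold D. lra. }
  destruct (choice_nat (fun k (g : R -> X) => g 0 = x k /\ g (dX (x k) (x (S k))) = x (S k) /\
      (forall s t, 0 <= s <= dX (x k) (x (S k)) -> 0 <= t <= dX (x k) (x (S k)) ->
        Rabs (dX (g s) (g t) - Rabs (s - t)) <= Rx)) (fun k => HgX (x k) (x (S k)))) as [γ Hγ].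
  set (seg := fun k a => γ k (clampφ Rx (dX (x k) (x (S k))) a)).
  assert (Hseg : forall k, (k < N)%nat ->
    (forall a, 0 <= a <= m -> dX (seg k a) (x k) <= a) /\
    (forall a, 0 <= a <= m -> dX (seg k a) (x (S k)) <= m - a) /\
    (forall a b, dX (seg k a) (seg k b) <= Rabs (a - b) + Rx)).
  { intros k Hk. destruct (Hγ k) as [G0 [G1 G2]].
    apply (seg_props dX Rx m (x k) (x (S k)) (γ k)); auto. }
  assert (HxN : x N = x 0%nat) by (unfold x; rewrite HposN, Hpos0; reflexivity).
  assert (HN2 : (2 <= N)%nat) by (unfold N; lia).
  pose proof (circle_lemma dX Rx m N x seg HmX HRx Hm HN2 HxN
    (fun k Hk => ltac:(pose proof (Hxl k Hk); lra))
    (fun k a Hk Ha => proj1 (Hseg k Hk) a Ha)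
    (fun k a Hk Ha => proj1 (proj2 (Hseg k Hk)) a Ha)
    (fun k a b Hk => proj2 (proj2 (Hseg k Hk)) a b)) as Hβ.
  pose proof (HBX _ _ Hβ) as HB.
  assert (HMeq : INR N * m = LX * lam * L + 2 * INR n * (LX * (lam * Ry) + C + 2 * Rx)).
  { unfold m, σ. rewrite HINR. field. lra. }
  assert (HMpos : 0 <= 2 * INR n * (LX * (lam * Ry) + C + 2 * Rx)).
  { assert (0 <= LX * (lam * Ry)) by (apply Rmult_le_pos; [lra| apply Rmult_le_pos; lra]).
    apply Rmult_le_pos; lra. }
  assert (Hfin : INR N * m <= BX).
  { apply HB. intros s Hs.
    replace (INR N * m / 2) with (INR n * m) in * by (rewrite HINR; field).
    destruct (antipodal_lemma dX m n x seg HmX Hm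
      (fun k a Hk Ha => proj1 (Hseg k Hk) a Ha)
      (fun k a Hk Ha => proj1 (proj2 (Hseg k Hk)) a Ha) s Hs) as [k [a [Hk [Ha' [Hd1 Hd2]]]]].
    cbv beta.
    pose proof (Hanti k ltac:(lia)). pose proof (Hanti (S k) ltac:(lia)).
    assert (Hdm : dX (seg (idx m s) (s - INR (idx m s) * m))
      (seg (idx m (s + INR n * m)) (s + INR n * m - INR (idx m (s + INR n * m)) * m)) >= D - m).
    { destruct (Rle_dec a (m / 2)); lra. }
    assert (Hid : D - m - 1 / KX * (INR n * m) = lam * θ * L - E).
    { unfold D, m, σ, θ, E. rewrite HINR. field. split; [lra|]. split; [lra|]. lra. }
    lra. }
  pose proof (Rle_abs BX). lra.
Qed.

Theorem corollary3p13 :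
  forall (X : Type) (dX : X -> X -> R) (Rx : R),
    is_metric dX -> 0 <= Rx -> strongly_shortcut dX Rx ->
    (exists LX : R, 1 < LX /\
       forall (Y : Type) (dY : Y -> Y -> R) (Ry C : R) (f : Y -> X),
         is_metric dY -> 0 <= Ry -> rough_geodesic dY Ry -> 0 < C ->
         qi_up_to_scaling dY dX f LX C -> strongly_shortcut dY Ry) /\
    (forall (Y : Type) (dY : Y -> Y -> R) (Ry : R) (f : Y -> X),
       is_metric dY -> 0 <= Ry -> rough_geodesic dY Ry ->
       rough_similarity dY dX f -> strongly_shortcut dY Ry).
Proof.
  intros X dX Rx HmX HRx [HgX [KX [HKX [BX HBX]]]].
  set (δ := Rmin 1 ((KX - 1) / 8)).
  assert (Hδ : 0 < δ <= 1 /\ δ <= (KX - 1) / 8).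
  { unfold δ, Rmin. destruct Rle_dec; lra. }
  set (LX := 1 + δ).
  assert (HLX : 1 < LX) by (unfold LX; lra).
  assert (H3 : LX ^ 3 < KX).
  { unfold LX. destruct Hδ as [[Ha Hb] Hc]. simpl.
    assert ((1 + δ) * ((1 + δ) * ((1 + δ) * 1)) <= 1 + 7 * δ) by nra. lra. }
  set (θ0 := 1 / (2 * LX ^ 2) - LX / (2 * KX)).
  assert (Hθ0 : 0 < θ0).
  { unfold θ0.
    replace (1 / (2 * LX ^ 2) - LX / (2 * KX)) with ((KX - LX ^ 3) / (2 * LX ^ 2 * KX))
      by (field; lra).
    apply Rdiv_lt_0_compat; [lra|]. simpl. nra. }
  destruct (INR_unbounded (LX / θ0)) as [n0 Hn0].
  set (n := S n0).
  assert (Hn : INR n > LX / θ0) by (unfold n; rewrite S_INR; lra).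
  assert (Hnp : 0 < INR n) by (unfold n; apply lt_0_INR; lia).
  assert (Hθ : 0 < 1 / (2 * LX ^ 2) - LX / (2 * INR n) - LX / (2 * KX)).
  { assert (LX / (2 * INR n) < θ0).
    { apply (Rmult_lt_reg_r (INR n)); [lra|].
      replace (LX / (2 * INR n) * INR n) with (LX / 2) by (field; lra).
      assert (LX < θ0 * INR n).
      { replace LX with (θ0 * (LX / θ0)) by (field; lra). apply Rmult_lt_compat_l; lra. }
      lra. }
    unfold θ0 in H. lra. }
  assert (P1 := part1 dX Rx KX BX LX n HmX HRx HgX HKX HBX HLX ltac:(unfold n; lia) Hθ).
  split.
  - exists LX. split; [exact HLX| exact P1].
  - intros Y dY Ry f HmY HRy HgY [C [HC [lam [Hlam [Hq Hs]]]]].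
    apply (P1 Y dY Ry C f HmY HRy HgY HC).
    exists lam. split; [exact Hlam|]. split; [|exact Hs].
    intros y1 y2. destruct (Hq y1 y2) as [Hlo Hup].
    pose proof HmY as [H0 _]. specialize (H0 y1 y2).
    assert (0 <= lam * dY y1 y2) by (apply Rmult_le_pos; lra).
    assert (1 / LX <= 1).
    { unfold Rdiv. rewrite Rmult_1_l. rewrite <- Rinv_1. apply Rinv_le_contravar; lra. }
    split.
    + assert (1 / LX * (lam * dY y1 y2) <= 1 / 1 * (lam * dY y1 y2)).
      { replace (1/1) with 1 by field. nra. }
      lra.
    + nra.
Qed.
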